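(* Consider the Data Revocation Game with negligible unlearning cost, with $d_i^{\max}=d^{\max}$ for all $i$ and $m_1<m_2<\dots<m_I$, where $m_i=(\xi_i\ell_i)^{-1}-\epsilon_i$. Then the game has a unique Nash equilibrium, described as follows. (i) If there is a user $j\in\mathcal I$ with $(I-j)d^{\max}\le m_j\le(I-j+1)d^{\max}$, then the unique equilibrium is $d_i^*=0$ for $i<j$, $d_j^*=(\xi_j\ell_j)^{-1}-(I-j)d^{\max}-\epsilon_j$, and $d_i^*=d^{\max}$ for $i>j$. (ii) Otherwise, with the conventions $m_0=-\infty$ and $m_{I+1}=+\infty$, there exists $j\in\{0,1,\dots,I\}$ with $m_j<(I-j)d^{\max}<m_{j+1}$, and the unique equilibrium is $d_i^*=0$ for $i\le j$ and $d_i^*=d^{\max}$ for $i>j$.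
   Context: Data Revocation Game with negligible unlearning cost: a finite set of users $\mathcal I=\{1,\dots,I\}$, $I\ge 2$, each with parameters $d_i^{\max}>0$, $\epsilon_i>0$, $\xi_i>0$, $\ell_i>0$. Each user chooses $d_i\in[0,d_i^{\max}]$, with payoff $U_i(d_i,\boldsymbol{d_{-i}})=\ln\big(\sum_{j\in\mathcal I}d_j+\epsilon_i\big)-\xi_i d_i\ell_i$. A Nash equilibrium is a profile $(d_i^* )$ with $d_i^*\in[0,d_i^{\max}]$ and $U_i(d_i^*,\boldsymbol{d_{-i}^*})\ge U_i(d_i,\boldsymbol{d_{-i}^*})$ for all $i$ and $d_i\in[0,d_i^{\max}]$. *)

(* Defs.v *)
(* concrete reals R. Users are indexed by 1..I (nat);
   strategy profiles are functions nat -> R (only indices 1..I matter). *)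
From Stdlib Require Import Reals List.
Import ListNotations.
Open Scope R_scope.

Definition total (I : nat) (d : nat -> R) : R :=
  fold_right Rplus 0 (map d (seq 1 I)).

Definition upd (d : nat -> R) (i : nat) (x : R) : nat -> R :=
  fun j => if Nat.eqb j i then x else d j.

Definition payoff (I : nat) (eps xi ell : nat -> R) (i : nat) (d : nat -> R) : R :=
  ln (total I d + eps i) - xi i * d i * ell i.

Definition is_NE (I : nat) (dmax eps xi ell : nat -> R) (d : nat -> R) : Prop :=
  forall i, (1 <= i <= I)%nat ->
    0 <= d i <= dmax i /\
    forall x, 0 <= x <= dmax i ->
      payoff I eps xi ell i (upd d i x) <= payoff I eps xi ell i d.

Definition mval (eps xi ell : nat -> R) (i : nat) : R := / (xi i * ell i) - eps i.

(* Main.v *)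
Require Import Defs.
From Stdlib Require Import Reals List Lra Lia Classical.
Import ListNotations.
Open Scope R_scope.

Lemma ln_lt_sub1 t : 0 < t -> t <> 1 -> ln t < t - 1.
Proof.
  intros Ht H1. assert (H := exp_ineq1 (t - 1)).
  assert (t - 1 <> 0) by lra. specialize (H H0).
  rewrite <- (ln_exp (t - 1)). apply ln_increasing; lra.
Qed.

Lemma ln_diff_lt y z : 0 < y -> 0 < z -> y <> z -> ln y - ln z < (y - z) / z.
Proof.
  intros Hy Hz Hne.
  assert (E : y = z * (y / z)) by (field; lra).
  assert (Hq : 0 < y / z) by (apply Rdiv_lt_0_compat; lra).
  rewrite E at 1. rewrite ln_mult by lra.
  assert (y / z <> 1). { intro C. apply Hne. rewrite E, C. ring. }
  assert (ln (y/z) < y / z - 1) by (apply ln_lt_sub1; lra).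
  replace ((y - z) / z) with (y / z - 1) by (field; lra). lra.
Qed.

Lemma ln_diff_le y z : 0 < y -> 0 < z -> ln y - ln z <= (y - z) / z.
Proof.
  intros Hy Hz. destruct (Req_dec y z) as [->|H].
  - unfold Rdiv. replace (z - z) with 0 by ring. lra.
  - left. now apply ln_diff_lt.
Qed.

Lemma ln_diff_gt y z : 0 < y -> 0 < z -> y <> z -> (y - z) / y < ln y - ln z.
Proof.
  intros Hy Hz Hne. assert (H := ln_diff_lt z y Hz Hy (not_eq_sym Hne)).
  replace ((y - z)/y) with (- ((z - y)/y)) by (field; lra). lra.
Qed.

Lemma fold_c l c : fold_right Rplus c l = fold_right Rplus 0 l + c.
Proof. induction l; simpl; [lra|rewrite IHl; lra]. Qed.

Lemma total_S n d : total (S n) d = total n d + d (S n).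
Proof.
  unfold total. rewrite seq_S, map_app, fold_right_app. simpl.
  rewrite fold_c. replace (1 + n)%nat with (S n) by lia. lra.
Qed.

Lemma total_ext I d e : (forall k, (1 <= k <= I)%nat -> d k = e k) -> total I d = total I e.
Proof.
  intros H. unfold total. f_equal. apply map_ext_in. intros k Hk.
  apply in_seq in Hk. apply H. lia.
Qed.

Lemma total_le I d e : (forall k, (1 <= k <= I)%nat -> d k <= e k) -> total I d <= total I e.
Proof.
  induction I; intros H.
  - unfold total; simpl; lra.
  - rewrite !total_S. assert (d (S I) <= e (S I)) by (apply H; lia).
    assert (total I d <= total I e) by (apply IHI; intros; apply H; lia). lra.
Qed.

Lemma total_upd I d i x : (1 <= i <= I)%nat -> total I (upd d i x) = total I d - d i + x.
Proof.
  induction I; intros Hi; [lia|].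
  rewrite !total_S. destruct (Nat.eq_dec i (S I)) as [->|Hne].
  - rewrite (total_ext I (upd d (S I) x) d).
    + unfold upd. rewrite Nat.eqb_refl. lra.
    + intros k Hk. unfold upd. destruct (Nat.eqb_spec k (S I)); [lia|auto].
  - rewrite IHI by lia. unfold upd. destruct (Nat.eqb_spec (S I) i); [lia|lra].
Qed.

Lemma total_step I j D : (j <= I)%nat ->
  total I (fun k => if Nat.leb k j then 0 else D) = INR (I - j) * D.
Proof.
  induction I; intros Hj.
  - unfold total; simpl. lra.
  - destruct (Nat.eq_dec j (S I)) as [->|Hne].
    + rewrite Nat.sub_diag. simpl INR.
      rewrite (total_ext _ _ (fun _ => 0)).
      * clear. induction I; [unfold total; simpl; lra|].
        rewrite total_S, IHI. lra.
      * intros k Hk. destruct (Nat.leb_spec k (S I)); [auto|lia].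
    + rewrite total_S, IHI by lia. destruct (Nat.leb_spec (S I) j); [lia|].
      replace (S I - j)%nat with (S (I - j)) by lia. rewrite S_INR. lra.
Qed.

Lemma total_nonneg I d : (forall k, (1 <= k <= I)%nat -> 0 <= d k) -> 0 <= total I d.
Proof.
  intros H. assert (E : total I (fun _ => 0) = 0).
  { clear. induction I; [unfold total; simpl; lra|]. rewrite total_S, IHI. lra. }
  rewrite <- E. apply total_le. auto.
Qed.

Lemma div_cmp u y c : 0 < y -> u / y - c * u = u * (1 - c * y) / y.
Proof. intros; field; lra. Qed.

Lemma sign_div_nonneg p y : 0 < y -> 0 <= p -> 0 <= p / y.
Proof. intros. unfold Rdiv. apply Rmult_le_pos; [lra|left; apply Rinv_0_lt_compat; lra]. Qed.

Lemma inv_le c y : 0 < c -> (/ c <= y <-> 1 <= c * y).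
Proof.
  intros Hc. assert (c * / c = 1) by (field; lra). split; intro H'; nra.
Qed.

Lemma payoff_upd I eps xi ell i d x : (1 <= i <= I)%nat ->
  payoff I eps xi ell i (upd d i x) = ln (total I d - d i + x + eps i) - xi i * ell i * x.
Proof.
  intros Hi. unfold payoff. rewrite total_upd by auto. unfold upd. rewrite Nat.eqb_refl.
  replace (total I d - d i + x + eps i) with (total I d - d i + x + eps i) by ring. replace (xi i * x * ell i) with (xi i * ell i * x) by ring. reflexivity.
Qed.

Lemma payoff_self I eps xi ell i d :
  payoff I eps xi ell i d = ln (total I d - d i + d i + eps i) - xi i * ell i * d i.
Proof. unfold payoff. replace (total I d - d i + d i) with (total I d) by ring. replace (xi i * d i * ell i) with (xi i * ell i * d i) by ring. reflexivity. Qed.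

Definition cond (I : nat) (D : R) (eps xi ell : nat -> R) (d : nat -> R) : Prop :=
  forall i, (1 <= i <= I)%nat -> 0 <= d i <= D /\
    (d i < D -> mval eps xi ell i <= total I d) /\
    (0 < d i -> total I d <= mval eps xi ell i).

Lemma others_nonneg I D d i : (forall k, (1 <= k <= I)%nat -> 0 <= d k <= D) ->
  (1 <= i <= I)%nat -> 0 <= total I d - d i.
Proof.
  intros H Hi. replace (total I d - d i) with (total I (upd d i 0)) by (rewrite total_upd; auto; ring).
  apply total_nonneg. intros k Hk. unfold upd. destruct (Nat.eqb k i); [lra|apply H; auto].
Qed.

Lemma NE_cond I dmax D eps xi ell d :
  (forall i, (1 <= i <= I)%nat -> dmax i = D) ->
  (forall i, (1 <= i <= I)%nat -> 0 < eps i /\ 0 < xi i /\ 0 < ell i) ->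
  is_NE I dmax eps xi ell d -> cond I D eps xi ell d.
Proof.
  intros Hdm Hp HN.
  assert (Hb : forall k, (1 <= k <= I)%nat -> 0 <= d k <= D).
  { intros k Hk. rewrite <- (Hdm k Hk). apply (HN k Hk). }
  intros i Hi. destruct (HN i Hi) as [_ Hbr]. rewrite (Hdm i Hi) in Hbr.
  destruct (Hp i Hi) as [He [Hx Hl]].
  set (c := xi i * ell i). assert (Hc : 0 < c) by (unfold c; nra).
  set (S := total I d). set (a := S - d i + eps i).
  assert (Ha : 0 < a) by (unfold a, S; pose proof (others_nonneg I D d i Hb Hi); lra).
  assert (Hm : mval eps xi ell i = / c - eps i) by reflexivity.
  pose proof (Hb i Hi) as Hdi.
  split; [auto|split].
  - intros Hlt. destruct (Rle_lt_dec (mval eps xi ell i) S) as [|Hgt]; [auto|exfalso].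
    set (x1 := Rmin D (mval eps xi ell i - S + d i)).
    assert (Hx1a : x1 <= D) by apply Rmin_l.
    assert (Hx1b : x1 <= mval eps xi ell i - S + d i) by apply Rmin_r.
    assert (Hx1c : d i < x1) by (unfold x1; apply Rmin_glb_lt; lra).
    specialize (Hbr x1 ltac:(lra)).
    rewrite payoff_upd, payoff_self in Hbr by auto. fold S in Hbr. fold c in Hbr.
    replace (S - d i + x1 + eps i) with (a + x1) in Hbr by (unfold a; ring).
    replace (S - d i + d i + eps i) with (a + d i) in Hbr by (unfold a; ring).
    pose proof (ln_diff_gt (a + x1) (a + d i) ltac:(lra) ltac:(lra) ltac:(lra)) as L.
    assert (Hy : c * (a + x1) <= 1).
    { assert (a + x1 <= / c) by (unfold a; lra).
      assert (c * / c = 1) by (field; lra). nra. }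
    pose proof (div_cmp (a + x1 - (a + d i)) (a + x1) c ltac:(lra)) as E.
    assert (0 <= (a + x1 - (a + d i)) * (1 - c * (a + x1)) / (a + x1))
      by (apply sign_div_nonneg; nra).
    nra.
  - intros Hpos. destruct (Rle_lt_dec S (mval eps xi ell i)) as [|Hgt]; [auto|exfalso].
    set (x1 := Rmax 0 (mval eps xi ell i - S + d i)).
    assert (Hx1a : 0 <= x1) by apply Rmax_l.
    assert (Hx1b : mval eps xi ell i - S + d i <= x1) by apply Rmax_r.
    assert (Hx1c : x1 < d i) by (unfold x1; apply Rmax_lub_lt; lra).
    specialize (Hbr x1 ltac:(lra)).
    rewrite payoff_upd, payoff_self in Hbr by auto. fold S in Hbr. fold c in Hbr.
    replace (S - d i + x1 + eps i) with (a + x1) in Hbr by (unfold a; ring).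
    replace (S - d i + d i + eps i) with (a + d i) in Hbr by (unfold a; ring).
    pose proof (ln_diff_lt (a + d i) (a + x1) ltac:(lra) ltac:(lra) ltac:(lra)) as L.
    assert (Hy : 1 <= c * (a + x1)).
    { assert (/ c <= a + x1) by (unfold a; lra). apply inv_le; auto. }
    pose proof (div_cmp (a + d i - (a + x1)) (a + x1) c ltac:(lra)) as E.
    assert (0 <= (a + d i - (a + x1)) * (c * (a + x1) - 1) / (a + x1))
      by (apply sign_div_nonneg; nra).
    assert ((a + d i - (a + x1)) * (c * (a + x1) - 1) / (a + x1) =
            - ((a + d i - (a + x1)) * (1 - c * (a + x1)) / (a + x1))) by (field; lra).
    nra.
Qed.

Lemma cond_NE I dmax D eps xi ell d :
  (forall i, (1 <= i <= I)%nat -> dmax i = D) ->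
  (forall i, (1 <= i <= I)%nat -> 0 < eps i /\ 0 < xi i /\ 0 < ell i) ->
  cond I D eps xi ell d -> is_NE I dmax eps xi ell d.
Proof.
  intros Hdm Hp HC.
  assert (Hb : forall k, (1 <= k <= I)%nat -> 0 <= d k <= D) by (intros k Hk; apply (HC k Hk)).
  intros i Hi. rewrite (Hdm i Hi). destruct (HC i Hi) as [Hdi [H1 H2]].
  split; [auto|]. intros x Hxr.
  destruct (Hp i Hi) as [He [Hx Hl]].
  set (c := xi i * ell i). assert (Hc : 0 < c) by (unfold c; nra).
  set (S := total I d). set (a := S - d i + eps i).
  assert (Ha : 0 < a) by (unfold a, S; pose proof (others_nonneg I D d i Hb Hi); lra).
  assert (Hm : mval eps xi ell i = / c - eps i) by reflexivity.
  rewrite payoff_upd, payoff_self by auto. fold S c.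
  replace (S - d i + x + eps i) with (a + x) by (unfold a; ring).
  replace (S - d i + d i + eps i) with (a + d i) by (unfold a; ring).
  pose proof (ln_diff_le (a + x) (a + d i) ltac:(lra) ltac:(lra)) as L.
  pose proof (div_cmp (a + x - (a + d i)) (a + d i) c ltac:(lra)) as E.
  assert (((a + x - (a + d i)) * (1 - c * (a + d i))) <= 0).
  { destruct (Rle_lt_dec x (d i)) as [Hle|Hlt].
    - destruct (Req_dec x (d i)) as [->|Hne]; [nra|].
      assert (Hs : S <= mval eps xi ell i) by (apply H2; lra).
      assert (a + d i <= / c) by (unfold a; lra).
      assert (c * / c = 1) by (field; lra). assert (c * (a + d i) <= c * / c) by (apply Rmult_le_compat_l; lra). nra.
    - assert (Hs : mval eps xi ell i <= S) by (apply H1; lra).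
      assert (/ c <= a + d i) by (unfold a; lra).
      apply inv_le in H; auto. nra. }
  assert (0 <= - ((a + x - (a + d i)) * (1 - c * (a + d i))) / (a + d i))
    by (apply sign_div_nonneg; lra).
  assert (- ((a + x - (a + d i)) * (1 - c * (a + d i))) / (a + d i) =
          - ((a + x - (a + d i)) * (1 - c * (a + d i)) / (a + d i))) by (field; lra).
  nra.
Qed.

Lemma mono_lt (m : nat -> R) I : (forall i, (1 <= i < I)%nat -> m i < m (S i)) ->
  forall i k, (1 <= i)%nat -> (i < k)%nat -> (k <= I)%nat -> m i < m k.
Proof.
  intros H i k. induction k; intros H1 H2 H3; [lia|].
  destruct (Nat.eq_dec i k) as [->|Hne].
  - apply H; lia.
  - assert (m i < m k) by (apply IHk; lia). assert (m k < m (S k)) by (apply H; lia). lra.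
Qed.

Lemma cond_lo I D eps xi ell d i : cond I D eps xi ell d -> (1 <= i <= I)%nat ->
  mval eps xi ell i < total I d -> d i = 0.
Proof.
  intros HC Hi Hlt. destruct (HC i Hi) as [Hb [_ H2]].
  destruct (Req_dec (d i) 0) as [|Hne]; auto.
  assert (total I d <= mval eps xi ell i) by (apply H2; lra). lra.
Qed.

Lemma cond_hi I D eps xi ell d i : cond I D eps xi ell d -> (1 <= i <= I)%nat ->
  total I d < mval eps xi ell i -> d i = D.
Proof.
  intros HC Hi Hlt. destruct (HC i Hi) as [Hb [H1 _]].
  destruct (Req_dec (d i) D) as [|Hne]; auto.
  assert (mval eps xi ell i <= total I d) by (apply H1; lra). lra.
Qed.

Lemma cond_total_le I D eps xi ell d d' : cond I D eps xi ell d -> cond I D eps xi ell d' ->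
  total I d' <= total I d.
Proof.
  intros HC HC'. destruct (Rle_lt_dec (total I d') (total I d)) as [|Hlt]; auto.
  exfalso. assert (total I d' <= total I d); [|lra].
  apply total_le. intros k Hk.
  destruct (HC k Hk) as [Hb [H1 _]]. destruct (HC' k Hk) as [Hb' [_ H2']].
  destruct (Rle_lt_dec (d' k) 0); [lra|].
  specialize (H2' r).
  destruct (Rle_lt_dec D (d k)); [lra|].
  specialize (H1 r0). lra.
Qed.

Lemma cond_unique I D eps xi ell d d' :
  (forall i, (1 <= i < I)%nat -> mval eps xi ell i < mval eps xi ell (S i)) ->
  cond I D eps xi ell d -> cond I D eps xi ell d' ->
  forall i, (1 <= i <= I)%nat -> d i = d' i.
Proof.
  intros Hm HC HC'.
  assert (HS : total I d = total I d').
  { pose proof (cond_total_le _ _ _ _ _ _ _ HC HC'). pose proof (cond_total_le _ _ _ _ _ _ _ HC' HC). lra. }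
  assert (Hne : forall k, (1 <= k <= I)%nat -> mval eps xi ell k <> total I d -> d k = d' k).
  { intros k Hk Hn. destruct (Rle_lt_dec (mval eps xi ell k) (total I d)).
    - assert (mval eps xi ell k < total I d) by lra.
      rewrite (cond_lo _ _ _ _ _ _ _ HC Hk H), (cond_lo _ _ _ _ _ _ _ HC' Hk); auto; lra.
    - rewrite (cond_hi _ _ _ _ _ _ _ HC Hk r), (cond_hi _ _ _ _ _ _ _ HC' Hk); auto; lra. }
  intros i Hi. destruct (Req_dec (mval eps xi ell i) (total I d)) as [Heq|Hn]; [|auto].
  assert (E : total I d' = total I (upd d i (d' i))).
  { apply total_ext. intros k Hk. unfold upd. destruct (Nat.eqb_spec k i) as [->|Hki]; auto.
    symmetry. apply Hne; auto. rewrite <- Heq. intro C.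
    destruct (Nat.lt_total k i) as [Hl|[Hl|Hl]]; [| lia |].
    - pose proof (mono_lt _ I Hm k i ltac:(lia) Hl ltac:(lia)). lra.
    - pose proof (mono_lt _ I Hm i k ltac:(lia) Hl ltac:(lia)). lra. }
  rewrite total_upd in E by auto. lra.
Qed.

Definition stepf (j : nat) (D : R) : nat -> R := fun k => if Nat.leb k j then 0 else D.

Lemma cond_e1 I D eps xi ell j : 0 < D ->
  (forall i, (1 <= i < I)%nat -> mval eps xi ell i < mval eps xi ell (S i)) ->
  (1 <= j <= I)%nat ->
  INR (I - j) * D <= mval eps xi ell j <= INR (I - j + 1) * D ->
  cond I D eps xi ell (fun i => if Nat.ltb i j then 0
                else if Nat.eqb i j then / (xi j * ell j) - INR (I - j) * D - eps j
                else D).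
Proof.
  intros HD Hm Hj Hc. set (v := / (xi j * ell j) - INR (I - j) * D - eps j).
  assert (Hv : v = mval eps xi ell j - INR (I - j) * D) by (unfold v, mval; ring).
  rewrite plus_INR in Hc. change (INR 1) with 1 in Hc.
  assert (HT : total I (fun i => if Nat.ltb i j then 0 else if Nat.eqb i j then v else D)
               = mval eps xi ell j).
  { rewrite (total_ext I _ (upd (stepf j D) j v)).
    - rewrite total_upd by auto. unfold stepf. rewrite total_step by lia.
      rewrite Nat.leb_refl. lra.
    - intros k Hk. unfold upd, stepf.
      destruct (Nat.ltb_spec k j); destruct (Nat.eqb_spec k j); destruct (Nat.leb_spec k j);
        auto; lia. }
  intros i Hi. rewrite HT.
  destruct (Nat.ltb_spec i j).
  - pose proof (mono_lt _ I Hm i j ltac:(lia) ltac:(lia) ltac:(lia)). repeat split; intros; lra.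
  - destruct (Nat.eqb_spec i j).
    + subst i. repeat split; intros. all: lra.
    + pose proof (mono_lt _ I Hm j i ltac:(lia) ltac:(lia) ltac:(lia)). repeat split; intros; lra.
Qed.

Lemma cond_e2 I D eps xi ell j : 0 < D ->
  (forall i, (1 <= i < I)%nat -> mval eps xi ell i < mval eps xi ell (S i)) ->
  (j <= I)%nat ->
  (j = 0%nat \/ mval eps xi ell j < INR (I - j) * D) ->
  (j = I \/ INR (I - j) * D < mval eps xi ell (S j)) ->
  cond I D eps xi ell (fun i => if Nat.leb i j then 0 else D).
Proof.
  intros HD Hm Hj H1 H2. intros i Hi.
  rewrite (total_step I j D Hj).
  destruct (Nat.leb_spec i j).
  - destruct H1 as [->|H1]; [lia|].
    assert (mval eps xi ell i <= mval eps xi ell j).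
    { destruct (Nat.eq_dec i j) as [->|]; [lra|].
      left. apply (mono_lt _ I Hm); lia. }
    repeat split; intros; lra.
  - destruct H2 as [->|H2]; [lia|].
    assert (mval eps xi ell (S j) <= mval eps xi ell i).
    { destruct (Nat.eq_dec i (S j)) as [->|]; [lra|].
      left. apply (mono_lt _ I Hm); lia. }
    repeat split; intros; lra.
Qed.

Lemma exists_j I D eps xi ell :
  (~ exists j, (1 <= j <= I)%nat /\
        INR (I - j) * D <= mval eps xi ell j <= INR (I - j + 1) * D) ->
  forall n, (n <= I)%nat -> exists j, (j <= n)%nat /\
     (j = 0%nat \/ mval eps xi ell j < INR (I - j) * D) /\
     (j = n \/ INR (I - j) * D < mval eps xi ell (S j)).
Proof.
  intros Hno n. induction n; intros Hn.
  - exists 0%nat. repeat split; auto.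
  - destruct IHn as [j [Hj [A B]]]; [lia|].
    destruct B as [->|B].
    + destruct (Rlt_le_dec (INR (I - n) * D) (mval eps xi ell (S n))).
      * exists n. repeat split; auto.
      * exists (S n). repeat split; auto. right.
        destruct (Rlt_le_dec (mval eps xi ell (S n)) (INR (I - S n) * D)); auto.
        exfalso. apply Hno. exists (S n). split; [lia|].
        replace (I - S n + 1)%nat with (I - n)%nat by lia. lra.
    + exists j. repeat split; auto.
Qed.
Theorem theorem2 (I : nat) (dmax : nat -> R) (D : R) (eps xi ell : nat -> R) :
  (2 <= I)%nat ->
  0 < D ->
  (forall i, (1 <= i <= I)%nat -> dmax i = D) ->
  (forall i, (1 <= i <= I)%nat -> 0 < eps i /\ 0 < xi i /\ 0 < ell i) ->
  (forall i, (1 <= i < I)%nat -> mval eps xi ell i < mval eps xi ell (S i)) ->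
  (* existence and uniqueness of the Nash equilibrium *)
  ((exists d, is_NE I dmax eps xi ell d) /\
   (forall d d', is_NE I dmax eps xi ell d -> is_NE I dmax eps xi ell d' ->
      forall i, (1 <= i <= I)%nat -> d i = d' i)) /\
  (* case (i) *)
  (forall j, (1 <= j <= I)%nat ->
     INR (I - j) * D <= mval eps xi ell j <= INR (I - j + 1) * D ->
     forall d, is_NE I dmax eps xi ell d ->
       forall i, (1 <= i <= I)%nat ->
         d i = (if Nat.ltb i j then 0
                else if Nat.eqb i j then / (xi j * ell j) - INR (I - j) * D - eps j
                else D)) /\
  (* case (ii), with m_0 = -oo and m_{I+1} = +oo *)
  ((~ exists j, (1 <= j <= I)%nat /\
        INR (I - j) * D <= mval eps xi ell j <= INR (I - j + 1) * D) ->
   exists j, (j <= I)%nat /\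
     (j = 0%nat \/ mval eps xi ell j < INR (I - j) * D) /\
     (j = I \/ INR (I - j) * D < mval eps xi ell (S j)) /\
     forall d, is_NE I dmax eps xi ell d ->
       forall i, (1 <= i <= I)%nat ->
         d i = (if Nat.leb i j then 0 else D)).
Proof.
  intros HI HD Hdm Hp Hm.
  assert (Uq : forall d d', is_NE I dmax eps xi ell d -> is_NE I dmax eps xi ell d' ->
      forall i, (1 <= i <= I)%nat -> d i = d' i).
  { intros d d' H1 H2. apply (cond_unique I D eps xi ell); auto;
      eapply NE_cond; eauto. }
  assert (Ci : forall j, (1 <= j <= I)%nat ->
     INR (I - j) * D <= mval eps xi ell j <= INR (I - j + 1) * D ->
     forall d, is_NE I dmax eps xi ell d ->
       forall i, (1 <= i <= I)%nat ->
         d i = (if Nat.ltb i j then 0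
                else if Nat.eqb i j then / (xi j * ell j) - INR (I - j) * D - eps j
                else D)).
  { intros j Hj Hc d Hd i Hi. apply (cond_unique I D eps xi ell d (fun k => if Nat.ltb k j then 0
                else if Nat.eqb k j then / (xi j * ell j) - INR (I - j) * D - eps j
                else D)); auto.
    - eapply NE_cond; eauto.
    - apply cond_e1; auto. }
  assert (Cii : (~ exists j, (1 <= j <= I)%nat /\
        INR (I - j) * D <= mval eps xi ell j <= INR (I - j + 1) * D) ->
   exists j, (j <= I)%nat /\
     (j = 0%nat \/ mval eps xi ell j < INR (I - j) * D) /\
     (j = I \/ INR (I - j) * D < mval eps xi ell (S j)) /\
     forall d, is_NE I dmax eps xi ell d ->
       forall i, (1 <= i <= I)%nat ->
         d i = (if Nat.leb i j then 0 else D)).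
  { intros Hno. destruct (exists_j I D eps xi ell Hno I (le_n I)) as [j [Hj [A B]]].
    exists j. split; [auto|split; [auto|split; [auto|]]].
    intros d Hd i Hi. apply (cond_unique I D eps xi ell d (fun k => if Nat.leb k j then 0 else D)); auto.
    - eapply NE_cond; eauto.
    - apply cond_e2; auto. }
  split; [split|split; [exact Ci|exact Cii]]; [|exact Uq].
  destruct (classic (exists j, (1 <= j <= I)%nat /\
        INR (I - j) * D <= mval eps xi ell j <= INR (I - j + 1) * D)) as [[j [Hj Hc]]|Hno].
  - eexists. apply (cond_NE I dmax D); auto. apply (cond_e1 I D eps xi ell j); auto.
  - destruct (exists_j I D eps xi ell Hno I (le_n I)) as [j [Hj [A B]]].
    eexists. apply (cond_NE I dmax D); auto. apply (cond_e2 I D eps xi ell j); auto.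
Qed.
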